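(* Let $\mathcal G$ be a $\sigma$-compact locally compact Hausdorff étale groupoid, $\ell$ a continuous, proper, controlled length function on $\mathcal G$, and $\rho$ the induced extended metric. Let $u\in\mathcal G^{(0)}$ and $R,\varepsilon>0$. Then there are $S\in[R,R+\varepsilon)$, an open neighborhood $V$ of $u$ in $\mathcal G^{(0)}$, an open set $W\subseteq\mathcal G$ and a homeomorphism $f:\bar B_\rho(u,S)\times V\to W$ such that: (1) $f(u,v)=v$ for all $v\in V$; (2) $f(x,u)=x$ for all $x\in\bar B_\rho(u,S)$; (3) $f(\bar B_\rho(u,S)\times\{v\})=\bar B_\rho(v,S)$ for all $v\in V$; (4) $|\rho(x,y)-\rho(f(x,v),f(y,v))|<\varepsilon$ for all $x,y\in\bar B_\rho(u,S)$ and $v\in V$.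
   Context: A length function is $\ell:\mathcal G\to[0,\infty)$ with $\ell(x)=0$ iff $x\in\mathcal G^{(0)}$, $\ell(x^{-1})=\ell(x)$, $\ell(xy)\le\ell(x)+\ell(y)$ for composable $x,y$. It is proper if every $K\subseteq\mathcal G\setminus\mathcal G^{(0)}$ with $\sup_K\ell<\infty$ is precompact, and controlled if $\sup_K\ell<\infty$ for every precompact $K$. The induced extended metric is $\rho(x,y)=\ell(xy^{-1})$ if $s(x)=s(y)$ and $\rho(x,y)=\infty$ otherwise. $\bar B_\rho(x,S)=\{y:\rho(x,y)\le S\}$ (a finite subset of the source fiber of $x$). *)

(* Defs.v *)
From HB Require Import structures.
From mathcomp Require Import all_boot all_order all_algebra.
From mathcomp Require Import all_classical all_reals all_analysis.
Set Implicit Arguments. Unset Strict Implicit. Unset Printing Implicit Defensive.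
Import Order.TTheory GRing.Theory Num.Theory.
Import numFieldNormedType.Exports.
Local Open Scope classical_set_scope.
Local Open Scope ring_scope.

(* A groupoid on a carrier G: unit space G0 (a subset of G), source s,
   range r, multiplication m (meaningful on composable pairs s x = r y,
   i.e. m x y = "x y"), inversion i. *)
Definition is_groupoid (G : Type) (G0 : set G) (s r : G -> G)
    (m : G -> G -> G) (i : G -> G) : Prop :=
  [/\ (forall x, G0 (s x) /\ G0 (r x)) /\
        (forall u, G0 u -> s u = u /\ r u = u),
      (forall x y, s x = r y -> s (m x y) = s y /\ r (m x y) = r x),
      (forall x y z, s x = r y -> s y = r z -> m (m x y) z = m x (m y z)),
      (forall x, m (r x) x = x /\ m x (s x) = x) &
      (forall x, [/\ s (i x) = r x, r (i x) = s x,
                     m x (i x) = r x & m (i x) x = s x])].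

Definition homeo_on (X Y : topologicalType) (A : set X) (B : set Y)
    (f : X -> Y) : Prop :=
  [/\ set_bij A B f, {within A, continuous f} &
      exists g : Y -> X, [/\ set_bij B A g,
        (forall x, A x -> g (f x) = x),
        (forall y, B y -> f (g y) = y) &
        {within B, continuous g}]].

Definition rel_open (X : topologicalType) (A V : set X) : Prop :=
  exists O, open O /\ V = O `&` A.

Definition is_topological_groupoid (G : topologicalType) (G0 : set G)
    (s r : G -> G) (m : G -> G -> G) (i : G -> G) : Prop :=
  [/\ is_groupoid G0 s r m i,
      {within [set p : G * G | s p.1 = r p.2], continuous (fun p => m p.1 p.2)}
      & continuous i].

Definition is_etale (G : topologicalType) (G0 : set G) (r : G -> G) : Prop :=
  forall x, exists U, [/\ open U, U x, rel_open G0 (r @` U) & homeo_on U (r @` U) r].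

Definition sigma_compact (X : topologicalType) : Prop :=
  exists K : nat -> set X, (forall n, compact (K n)) /\ \bigcup_n K n = setT.

Definition is_length_function (R : realType) (G : Type) (G0 : set G)
    (s r : G -> G) (m : G -> G -> G) (i : G -> G) (l : G -> R) : Prop :=
  [/\ (forall x, 0 <= l x),
      (forall x, l x = 0 <-> G0 x),
      (forall x, l (i x) = l x) &
      (forall x y, s x = r y -> l (m x y) <= l x + l y)].

Definition length_proper (R : realType) (G : topologicalType) (G0 : set G)
    (l : G -> R) : Prop :=
  forall K : set G, K `<=` ~` G0 ->
    (exists M : R, forall x, K x -> l x <= M) -> precompact K.

Definition length_controlled (R : realType) (G : topologicalType)
    (l : G -> R) : Prop :=
  forall K : set G, precompact K -> exists M : R, forall x, K x -> l x <= M.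

Definition rho (R : realType) (G : Type) (s : G -> G) (m : G -> G -> G)
    (i : G -> G) (l : G -> R) (x y : G) : \bar R :=
  if asbool (s x = s y) then (l (m x (i y)))%:E else +oo%E.

Definition cball_rho (R : realType) (G : Type) (s : G -> G) (m : G -> G -> G)
    (i : G -> G) (l : G -> R) (x : G) (S : R) : set G :=
  [set y | (rho s m i l x y <= S%:E)%E].

(* Main.v *)
Require Import Defs.
From HB Require Import structures.
From mathcomp Require Import all_boot all_order all_algebra.
From mathcomp Require Import all_classical all_reals all_analysis.
From mathcomp Require Import lra.
Import Order.TTheory GRing.Theory Num.Theory.
Import numFieldNormedType.Exports.
Local Open Scope classical_set_scope.
Local Open Scope ring_scope.
Set Implicit Arguments. Unset Strict Implicit.

Lemma nbhs_open (X : topologicalType) (x : X) (A : set X) :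
  nbhs x A -> exists N, [/\ open N, N x & N `<=` A].
Proof. by rewrite nbhsE => -[N [hON Nx] NA]; exists N. Qed.

Definition cw (X Y : topologicalType) (A : set X) (f : X -> Y) :=
  forall x, A x -> forall Q, open Q -> Q (f x) ->
    exists N, [/\ open N, N x & forall y, N y -> A y -> Q (f y)].

Lemma cwP (X Y : topologicalType) (A : set X) (f : X -> Y) :
  {within A, continuous f} <-> cw A f.
Proof.
rewrite subspace_continuousP; split.
  move=> H x Ax Q oO Ofx.
  have : (f @ within A (nbhs x)) Q.
    by apply: (H x Ax); apply: open_nbhs_nbhs; split.
  
  rewrite /= /within /=; move=> /nbhs_open [N [hON Nx NO]].
  by exists N; split => // y Ny Ay; apply: NO.
move=> H x Ax P /nbhs_open [Q [oO Ofx OP]].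
have [N [hON Nx NO]] := H x Ax Q oO Ofx.
have hN : nbhs x N by apply: open_nbhs_nbhs.
rewrite /= /within /=; apply: filterS hN.
by move=> y Ny Ay; apply: OP; exact: NO.
Qed.

Lemma open_prod_box (X Y : topologicalType) (N : set (X * Y)) (a : X) (b : Y) :
  open N -> N (a, b) -> exists N1 N2, [/\ open N1, open N2, N1 a, N2 b &
     forall a' b', N1 a' -> N2 b' -> N (a', b')].
Proof.
move=> oN Nab; have : nbhs (a, b) N by apply: open_nbhs_nbhs.
move=> [[Q1 Q2] [/= h1 h2] hsub].
have [N1 [hO1 a1 s1]] := nbhs_open h1; have [N2 [hO2 b2 s2]] := nbhs_open h2.
exists N1, N2; split => // a' b' /s1 ? /s2 ?; exact: (hsub (a', b')).
Qed.

Lemma open_setX' (X Y : topologicalType) (A : set X) (B : set Y) :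
  open A -> open B -> open (A `*` B).
Proof.
move=> oA oB; rewrite openE => p [Ap Bp].
exists (A, B); first by split; apply: open_nbhs_nbhs.
by [].
Qed.

Lemma cont_open (X Y : topologicalType) (f : X -> Y) (Q : set Y) :
  continuous f -> open Q -> open (f @^-1` Q).
Proof. by move=> /continuousP; apply. Qed.

Lemma compact_discrete_finite (T : topologicalType) (A : set T) :
  compact A ->
  (forall y, A y -> exists N, [/\ open N, N y & forall z, A z -> N z -> z = y]) ->
  finite_set A.
Proof.
move=> cA disc; apply: contrapT => nfin.
pose F := [set P : set T | finite_set (A `\` P)].
have FF : ProperFilter F.
  apply: Build_ProperFilter.
    by rewrite /F /= setD0.
  constructor.
  - by rewrite /F /= setDT; exact: finite_set0.
  - move=> P Q FP FQ; rewrite /F /= setDIr.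
    by rewrite finite_setU.
  - move=> P Q PQ FP; apply: sub_finite_set FP => x [Ax nQx]; split => // Px.
    by apply: nQx; apply: PQ.
have FA : F A by rewrite /F /= setDv; exact: finite_set0.
have [z [Az clz]] := cA F FF FA.
have [N [hON Nz NA]] := disc z Az.
have FP : F (A `\` [set z]).
  rewrite /F /=; apply: sub_finite_set (finite_set1 z) => x [Ax nx].
  by apply: contrapT => nxz; apply: nx; split.
have nN : nbhs z N by apply: open_nbhs_nbhs.
have [y [[Ay nyz] Ny]] := clz _ _ FP nN.
by apply: nyz; apply: NA.
Qed.

Definition good (T : topologicalType) (G0 : set T) (u : T) (Q : T -> Prop) :=
  exists N, [/\ open N, N u & forall v, N v -> G0 v -> Q v].

Lemma good_and (T : topologicalType) (G0 : set T) (u : T) (Q1 Q2 : T -> Prop) :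
  good G0 u Q1 -> good G0 u Q2 -> good G0 u (fun v => Q1 v /\ Q2 v).
Proof.
move=> [N1 [hO1 u1 h1]] [N2 [hO2 u2 h2]]; exists (N1 `&` N2); split => //.
  exact: openI.
by move=> v [n1 n2] gv; split; [apply: h1 | apply: h2].
Qed.

Lemma good_fin (T : topologicalType) (G0 : set T) (u : T) (I : eqType)
    (A : set I) (Q : I -> T -> Prop) :
  finite_set A -> (forall a, A a -> good G0 u (Q a)) ->
  good G0 u (fun v => forall a, A a -> Q a v).
Proof.
move=> /finite_seqP [sq ->]; elim: sq => [|a sq IH] H.
  by exists setT; split => //; exact: openT.
have [|N [hON uN hN]] := IH.
  by move=> b /= bs; apply: H; rewrite /= inE bs orbT.
have [|N' [hON' uN' hN']] := H a; first by rewrite /= inE eqxx.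
exists (N `&` N'); split => //; first exact: openI.
move=> v [nv nv'] gv b /=; rewrite inE => /orP [/eqP -> | bs].
  exact: hN'.
exact: hN.
Qed.

Section Alg.
Context {R : realType} {G : Type} {G0 : set G} {s r : G -> G}
  {m : G -> G -> G} {i : G -> G} {l : G -> R}.
Hypothesis HG : is_groupoid G0 s r m i.
Hypothesis Hl : is_length_function G0 s r m i l.

Lemma sG0 x : G0 (s x). Proof. by case: HG => [[H _] _ _ _ _]; case: (H x). Qed.
Lemma rG0 x : G0 (r x). Proof. by case: HG => [[H _] _ _ _ _]; case: (H x). Qed.
Lemma unit_s v : G0 v -> s v = v. Proof. by case: HG => [[_ H] _ _ _ _] /H []. Qed.
Lemma unit_r v : G0 v -> r v = v. Proof. by case: HG => [[_ H] _ _ _ _] /H []. Qed.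
Lemma smul x y : s x = r y -> s (m x y) = s y.
Proof. by case: HG => [_ H _ _ _] /H []. Qed.
Lemma rmul x y : s x = r y -> r (m x y) = r x.
Proof. by case: HG => [_ H _ _ _] /H []. Qed.
Lemma massoc x y z : s x = r y -> s y = r z -> m (m x y) z = m x (m y z).
Proof. by case: HG => [_ _ H _ _]; apply: H. Qed.
Lemma mrl x : m (r x) x = x. Proof. by case: HG => [_ _ _ H _]; case: (H x). Qed.
Lemma msr x : m x (s x) = x. Proof. by case: HG => [_ _ _ H _]; case: (H x). Qed.
Lemma si x : s (i x) = r x. Proof. by case: HG => [_ _ _ _ H]; case: (H x). Qed.
Lemma ri x : r (i x) = s x. Proof. by case: HG => [_ _ _ _ H]; case: (H x). Qed.
Lemma mi x : m x (i x) = r x. Proof. by case: HG => [_ _ _ _ H]; case: (H x). Qed.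
Lemma im x : m (i x) x = s x. Proof. by case: HG => [_ _ _ _ H]; case: (H x). Qed.

Lemma ii x : i (i x) = x.
Proof.
have h1 : x = m (m (i (i x)) (i x)) x by rewrite im si mrl.
have h2 : s (i (i x)) = s x by rewrite si ri.
rewrite [RHS]h1 massoc ?si // im -h2 msr //.
Qed.

Lemma unit_i v : G0 v -> i v = v.
Proof.
move=> Hv.
have e : r (i v) = v by rewrite ri unit_s.
have h : m v (i v) = v by rewrite mi unit_r.
by rewrite -{1}e mrl in h.
Qed.

Lemma l_unit v : G0 v -> l v = 0.
Proof. by case: Hl => _ H _ _ /H. Qed.
Lemma l_i x : l (i x) = l x. Proof. by case: Hl. Qed.
Lemma l_ge0 x : 0 <= l x. Proof. by case: Hl. Qed.
Lemma l_eq0 x : l x = 0 -> G0 x. Proof. by case: Hl => _ H _ _ /H. Qed.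

Lemma rho_same x y : s x = s y -> rho s m i l x y = (l (m x (i y)))%:E.
Proof. by move=> e; rewrite /rho asboolT. Qed.

Lemma rho_unit v y : G0 v -> s y = v -> rho s m i l v y = (l y)%:E.
Proof.
move=> Hv e; have sv := unit_s Hv.
rewrite rho_same; last by rewrite sv e.
have e2 : v = r (i y) by rewrite ri.
by rewrite {1}e2 mrl l_i.
Qed.

Lemma ball_unit v (T : R) y : G0 v ->
  cball_rho s m i l v T y <-> s y = v /\ l y <= T.
Proof.
move=> Hv; rewrite /cball_rho /=; split.
  case: (pselect (s y = v)) => e.
    by rewrite rho_unit // lee_fin.
  by rewrite /rho asboolF // unit_s // => e'; apply: e.
by move=> [e h]; rewrite rho_unit // lee_fin.
Qed.

Lemma mi_unit_eq x y : s x = s y -> G0 (m x (i y)) -> x = y.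
Proof.
move=> e Hw.
have c1 : s x = r (i y) by rewrite ri.
have c2 : s (i y) = r y by rewrite si.
have sw := unit_s Hw; have rw := unit_r Hw.
rewrite smul // si in sw; rewrite rmul // in rw.
have h : m (m x (i y)) y = x by rewrite massoc // im -e msr.
by rewrite -[in LHS]h -sw mrl.
Qed.
End Alg.

Section Main.
Variables (R : realType) (G : topologicalType) (G0 : set G) (s r : G -> G)
  (m : G -> G -> G) (i : G -> G) (l : G -> R).
Hypothesis HG : is_groupoid G0 s r m i.
Hypothesis Hl : is_length_function G0 s r m i l.
Hypothesis Hm : cw [set p : G * G | s p.1 = r p.2] (fun p => m p.1 p.2).
Hypothesis Hi : continuous i.
Hypothesis Hr : continuous r.
Hypothesis Hs : continuous s.
Hypothesis Hhaus : hausdorff_space G.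
Hypothesis Hlc : continuous l.
Hypothesis Hprop : length_proper G0 l.
Variables (U : G -> set G) (g : G -> G -> G).
Hypothesis HU1 : forall x, open (U x) /\ U x (i x).
Hypothesis HU2 : forall x v, (r @` U x) v -> U x (g x v) /\ r (g x v) = v.
Hypothesis HU3 : forall x y, U x y -> g x (r y) = y.
Hypothesis HU4 : forall x, cw (r @` U x) (g x).
Hypothesis HU5 : forall x, exists2 Q, open Q & r @` U x = Q `&` G0.
Variables (u : G) (Rad eps : R).
Hypothesis Hu : G0 u.
Hypothesis HRad : 0 < Rad.
Hypothesis Heps : 0 < eps.

Local Notation D x := (r @` U x).
Definition sig x v := i (g x v).

Lemma D_G0 x v : D x v -> G0 v.
Proof. by move=> [y _ <-]; exact: (rG0 HG). Qed.

Lemma D_s x : D x (s x).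
Proof. by exists (i x); [case: (HU1 x) | rewrite (ri HG)]. Qed.

Lemma sig_s x v : D x v -> s (sig x v) = v.
Proof. by move=> /HU2 [_ e]; rewrite /sig (si HG). Qed.

Lemma sig_U x v : D x v -> U x (i (sig x v)).
Proof. by move=> /HU2 [h _]; rewrite /sig (ii HG). Qed.

Lemma sig_key x y : U x (i y) -> D x (s y) /\ sig x (s y) = y.
Proof.
move=> h; split; first by exists (i y) => //; rewrite (ri HG).
by rewrite /sig -(ri HG) HU3 // (ii HG).
Qed.

Lemma sig_at x : sig x (s x) = x.
Proof. by case: (sig_key (proj2 (HU1 x))). Qed.

Lemma sig_cw x : cw (D x) (sig x).
Proof.
move=> v Dv Q oQ Qv.
have oQ' : open (i @^-1` Q) by apply: cont_open.
have [N [oN Nv NQ]] := HU4 Dv oQ' Qv.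
by exists N; split => // w Nw Dw; apply: NQ.
Qed.

Lemma sig_unit v : G0 v -> U u v -> D u v /\ sig u v = v.
Proof.
move=> Hv Uv.
have e : r v = v by apply: (unit_r HG).
split; first by exists v.
by rewrite /sig -{1}e HU3 // (unit_i HG).
Qed.

Lemma fiber_disc x y : s x = s y -> U x (i y) -> y = x.
Proof.
by move=> e /sig_key [_ h]; rewrite -h -e sig_at.
Qed.


Lemma fiberball_finite (T : R) : finite_set [set y | s y = u /\ l y <= T].
Proof.
set C1 := [set y | ~ G0 y /\ l y <= T].
have pC1 : precompact C1.
  by apply: Hprop; [move=> y [] | exists T => y []].
have cC : compact (closure C1) by rewrite -precompactE.
set A := [set y | s y = u /\ l y <= T].
have clA : closed A.
  have -> : A = s @^-1` [set u] `&` l @^-1` [set t | t <= T] by [].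
  apply: closedI; apply: (proj1 (continuous_closedP _)) => //.
    exact: accessible_closed_set1 (hausdorff_accessible Hhaus) u.
apply: compact_discrete_finite.
  have cU : compact (closure C1 `|` [set u]).
    by apply: compactU => //; exact: compact_set1.
  apply: (subclosed_compact clA cU).
  move=> y [sy ly]; case: (pselect (G0 y)) => Gy.
    by right; rewrite /= -sy (unit_s HG Gy).
  by left; apply: subset_closure.
move=> y [sy ly]; exists (i @^-1` U y); split.
- by apply: cont_open => //; case: (HU1 y).
- by case: (HU1 y).
- move=> z [sz lz] Uz; apply: fiber_disc => //; by rewrite sy sz.
Qed.

Lemma exists_S : exists S, Rad <= S < Rad + eps /\
  forall y, s y = u -> l y <= Rad + eps -> l y != S.
Proof.
pose f (k : nat) : R := Rad + eps / (k.+2)%:R.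
have fin := finite_image l (fiberball_finite (Rad + eps)).
have finj : injective f.
  move=> a b; rewrite /f => /addrI /(mulfI (lt0r_neq0 Heps)) /invr_inj.
  by move/eqP; rewrite eqr_nat => /eqP [].
have [k hk] : exists k, ~ (l @` [set y | s y = u /\ l y <= Rad + eps]) (f k).
  apply: contrapT => H.
  have hT : f @^-1` (l @` [set y | s y = u /\ l y <= Rad + eps]) = setT.
    apply/seteqP; split => // k _ /=.
    by apply: contrapT => nk; apply: H; exists k.
  apply: infinite_nat; rewrite -hT; apply: finite_preimage => //.
  by move=> a b _ _; apply: finj.
have fpos : 0 < eps / (k.+2)%:R by apply: divr_gt0.
exists (f k); split.
  apply/andP; split; first by rewrite /f lerDl ltW.
  rewrite /f ltrD2l ltr_pdivrMr ?ltr0n // ltr_pMr // ltr1n //.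
move=> y sy ly; apply/eqP => e; apply: hk; by exists y.
Qed.

Section WithS.
Variable S : R.
Hypothesis HS1 : Rad <= S < Rad + eps.
Hypothesis HS2 : forall y, s y = u -> l y <= Rad + eps -> l y != S.

Local Notation B := (cball_rho s m i l u S).

Lemma B_iff y : B y <-> s y = u /\ l y <= S.
Proof. exact: (ball_unit HG Hl _ _ Hu). Qed.

Lemma S_le : S <= Rad + eps.
Proof. by case/andP: HS1 => _ /ltW. Qed.

Lemma B_finite : finite_set B.
Proof.
apply: sub_finite_set (fiberball_finite (Rad + eps)) => y /B_iff [sy ly].
by split => //; apply: le_trans ly S_le.
Qed.

Lemma B_lt y : B y -> l y < S.
Proof.
move=> /B_iff [sy ly]; rewrite lt_neqAle ly andbT.
by apply: HS2 => //; apply: le_trans ly S_le.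
Qed.

Lemma B_u : B u.
Proof.
apply/B_iff; split; first exact: (unit_s HG Hu).
rewrite (l_unit Hl Hu); case/andP: HS1 => h _; apply: le_trans h; exact: ltW.
Qed.

Lemma B_s x : B x -> s x = u.
Proof. by case/B_iff. Qed.

Lemma g1 x : B x -> good G0 u (fun v => D x v).
Proof.
move=> Bx; have [Q oQ eQ] := HU5 x.
have Du : D x u by rewrite -(B_s Bx); exact: D_s.
exists Q; split => //; first by move: Du; rewrite eQ => -[].
by move=> v Qv Gv; rewrite eQ.
Qed.

Lemma g2 : good G0 u (fun v => U u v).
Proof.
exists (U u); split => //; first by case: (HU1 u).
by have := proj2 (HU1 u); rewrite (unit_i HG Hu).
Qed.

Lemma g3 x : B x -> good G0 u (fun v => D x v -> l (sig x v) <= S).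
Proof.
move=> Bx.
have Du : D x u by rewrite -(B_s Bx); exact: D_s.
have sx : sig x u = x by rewrite -(B_s Bx) sig_at.
have oP : open (l @^-1` [set t | t < S]) by apply: cont_open => //; exact: open_lt.
have hx : (l @^-1` [set t | t < S]) (sig x u) by rewrite /= sx; exact: B_lt.
have [N [oN Nu NP]] := sig_cw Du oP hx.
exists N; split => // v Nv Gv Dv; apply: ltW; exact: NP.
Qed.

Definition pcond x y v :=
  D x v -> D y v ->
  `|l (m x (i y)) - l (m (sig x v) (i (sig y v)))| <
    (if x == y then eps else Num.min eps (l (m x (i y)))).

Lemma l_mi x : l (m x (i x)) = 0.
Proof. by rewrite (mi HG) (l_unit Hl) //; exact: (rG0 HG). Qed.

Lemma g4 x y : B x -> B y -> good G0 u (pcond x y).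
Proof.
move=> Bx By; rewrite /pcond.
case: eqP => [<-|nxy].
  exists setT; split => //; first exact: openT.
  by move=> v _ _ _ _; rewrite !l_mi subrr normr0.
set c := l (m x (i y)).
have cpos : 0 < c.
  rewrite lt_neqAle (l_ge0 Hl) andbT; apply/eqP => c0; apply: nxy.
  apply: (mi_unit_eq HG); first by rewrite !B_s.
  by apply: (l_eq0 Hl); exact: esym c0.
set tol := Num.min eps c.
have tpos : 0 < tol by rewrite lt_min Heps cpos.
set P := [set t : R | c - tol < t /\ t < c + tol].
have oP : open P.
  have -> : P = [set t | c - tol < t] `&` [set t | t < c + tol] by [].
  by apply: openI; [exact: open_gt | exact: open_lt].
have oLP : open (l @^-1` P) by apply: cont_open.
have comp : s x = r (i y) by rewrite (ri HG) !B_s.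
have Pc : (l @^-1` P) (m x (i y)).
  by rewrite /= -/c; split; [rewrite ltrBlDr ltrDl | rewrite ltrDl].
have [N [oN Nxy NP]] := @Hm (x, i y) comp _ oLP Pc.
have [N1 [N2 [hN1o hN2o N1x N2y N12]]] := open_prod_box oN Nxy.
have Dxu : D x u by rewrite -(B_s Bx); exact: D_s.
have Dyu : D y u by rewrite -(B_s By); exact: D_s.
have sxu : sig x u = x by rewrite -(B_s Bx) sig_at.
have syu : sig y u = y by rewrite -(B_s By) sig_at.
have hx1 : N1 (sig x u) by rewrite sxu.
have [Nx [oNx Nxu NxP]] := sig_cw Dxu hN1o hx1.
have o2' : open (i @^-1` N2) by apply: cont_open.
have hy1 : (i @^-1` N2) (sig y u) by rewrite /= syu.
have [Ny [oNy Nyu NyP]] := sig_cw Dyu o2' hy1.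
exists (Nx `&` Ny); split => //; first exact: openI.
move=> v [nx ny] Gv Dx Dy.
have hm : (l @^-1` P) (m (sig x v) (i (sig y v))).
  apply: (NP (sig x v, i (sig y v))); first by apply: N12; [apply: NxP | apply: NyP].
  by rewrite /= (ri HG) !sig_s.
move: hm; rewrite /= -/c => -[h1 h2].
by rewrite ltr_norml; apply/andP; split; lra.
Qed.

Definition Qs v := forall y, s y = v -> l y <= S -> ~ G0 y ->
  exists x, B x /\ U x (i y).

Lemma g5 : good G0 u Qs.
Proof.
apply: contrapT => ng.
pose bad y := l y <= S /\ ~ G0 y /\ (forall x, B x -> ~ U x (i y)).
have hb : forall N, open N -> N u -> exists y, bad y /\ N (s y).
  move=> N oN Nu; apply: contrapT => H; apply: ng; exists N; split => //.
  move=> v Nv Gv y sy ly ny; apply: contrapT => nex; apply: H; exists y.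
  split; last by rewrite sy.
  split => //; split => // x Bx Ux; apply: nex; by exists x.
pose F := [set P : set G | exists N,
   [/\ open N, N u & forall y, bad y -> N (s y) -> P y]].
have FF : ProperFilter F.
  apply: Build_ProperFilter.
    move=> [N [oN Nu H]]; have [y [hby Ny]] := hb N oN Nu; exact: (H y hby Ny).
  constructor.
  - by exists setT; split => //; exact: openT.
  - move=> P1 P2 [N1 [oN1 N1u H1]] [N2 [oN2 N2u H2]].
    exists (N1 `&` N2); split => //; first exact: openI.
    by move=> y hby [n1 n2]; split; [apply: H1 | apply: H2].
  - move=> P1 P2 P12 [N [oN Nu H]]; exists N; split => // y hby Ny.
    by apply: P12; apply: H.
set C1 := [set y | ~ G0 y /\ l y <= Rad + eps].
have pC1 : precompact C1.
  by apply: Hprop; [move=> y [] | exists (Rad + eps) => y []].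
have cC : compact (closure C1) by rewrite -precompactE.
have FC : F (closure C1).
  exists setT; split => //; first exact: openT.
  move=> y [ly [ny _]] _; apply: subset_closure; split => //.
  exact: le_trans ly S_le.
have [z [Cz clz]] := cC F FF FC.
have sz : s z = u.
  apply: contrapT => nz.
  have nz' : s z != u by apply/eqP.
  move: Hhaus; rewrite open_hausdorff => /(_ _ _ nz') [[A1 A2] /= [A1s A2u]].
  move=> [oA1 oA2 /eqP A12].
  have FP : F [set y | A2 (s y)].
    exists A2; split => //; first by move: A2u; rewrite inE.
  have nZ : nbhs z (s @^-1` A1).
    apply: open_nbhs_nbhs; split; first exact: cont_open.
    by move: A1s; rewrite inE.
  have [y [y2 y1]] := clz _ _ FP nZ.
  have : (A1 `&` A2) (s y) by [].
  by rewrite A12.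
have lz : l z <= S.
  have [//|lt] := leP (l z) S.
  have FP : F bad.
    exists setT; split => //; first exact: openT.
  have nZ : nbhs z (l @^-1` [set t | S < t]).
    apply: open_nbhs_nbhs; split => //; apply: cont_open => //; exact: open_gt.
  have [y [[ly _] y1]] := clz _ _ FP nZ.
  by move: y1; rewrite /= ltNge ly.
have Bz : B z by apply/B_iff.
have FP : F bad by exists setT; split => //; exact: openT.
have nZ : nbhs z (i @^-1` U z).
  apply: open_nbhs_nbhs; split; first by apply: cont_open => //; case: (HU1 z).
  by case: (HU1 z).
have [y [[_ [_ hy]] y1]] := clz _ _ FP nZ.
exact: (hy z Bz y1).
Qed.

Definition fmap (p : G * G) := sig p.1 p.2.

Lemma main_S : exists (V W : set G) (f : G * G -> G),
    [/\ (V `<=` G0 /\ rel_open G0 V /\ V u) /\ open W,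
        homeo_on (B `*` V) W f /\
        (forall v, V v -> f (u, v) = v) /\
        (forall x, B x -> f (x, u) = x),
        (forall v, V v ->
           f @` (B `*` [set v]) = cball_rho s m i l v S) &
        (forall x y v, B x -> B y -> V v ->
           (`| rho s m i l x y - rho s m i l (f (x, v)) (f (y, v)) | < eps%:E)%E)].
Proof.
have [N2 [oN2 N2u H2]] := g2.
have [N1 [oN1 N1u H1]] := good_fin B_finite g1.
have [N3 [oN3 N3u H3]] := good_fin B_finite g3.
have [N4 [oN4 N4u H4]] := good_fin (finite_setX B_finite B_finite)
   (fun p (hp : (B `*` B) p) => g4 hp.1 hp.2).
have [N5 [oN5 N5u H5]] := g5.
set N := N1 `&` N2 `&` N3 `&` N4 `&` N5.
have oN : open N by do 4 apply: openI => //.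
set V := N `&` G0.
have VG v : V v -> G0 v by case.
have VU v : V v -> U u v by move=> [[[[[? ?] ?] ?] ?] Gv]; apply: H2.
have VD v x : V v -> B x -> D x v by move=> [[[[[? ?] ?] ?] ?] Gv]; apply: H1.
have Vl v x : V v -> B x -> l (sig x v) <= S.
  by move=> [[[[[? ?] ?] ?] ?] Gv] Bx; apply: H3 => //; apply: H1.
have Vp v x y : V v -> B x -> B y -> pcond x y v.
  by move=> [[[[[? ?] ?] ?] ?] Gv] Bx By; apply: (H4 v _ _ (x, y)).
have VQ v : V v -> Qs v by move=> [[[[[? ?] ?] ?] ?] Gv]; apply: H5.
have Vu : V u by split => //; do 4 split => //.
have fu v : V v -> fmap (u, v) = v by move=> Vv; case: (sig_unit (VG _ Vv) (VU _ Vv)).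
have fs x v : V v -> B x -> s (fmap (x, v)) = v by move=> Vv Bx; apply: sig_s; apply: VD.
have finj x x' v : V v -> B x -> B x' -> fmap (x, v) = fmap (x', v) -> x = x'.
  move=> Vv Bx Bx' e; have := Vp v x x' Vv Bx Bx' (VD _ _ Vv Bx) (VD _ _ Vv Bx').
  case: eqP => // nxx'.
  rewrite /fmap /= in e; rewrite -e l_mi subr0 ger0_norm ?(l_ge0 Hl) //.
  by rewrite lt_min ltxx andbF.
have finj2 : forall p q, (B `*` V) p -> (B `*` V) q -> fmap p = fmap q -> p = q.
  move=> [x v] [x' v'] [/= Bx Vv] [/= Bx' Vv'] e.
  have ev : v = v' by rewrite -(fs x v Vv Bx) e fs.
  by subst v'; rewrite (finj x x' v Vv Bx Bx' e).
set W := fmap @` (B `*` V).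
have Wchar : W = \bigcup_(x in B) (i @^-1` U x `&` s @^-1` N).
  apply/seteqP; split.
    move=> w [[x v] [/= Bx Vv] <-]; exists x => //; split.
      by apply: sig_U; apply: VD.
    by rewrite /= (fs x v Vv Bx); case: Vv.
  move=> w [x Bx [/= Uw Nw]].
  have [Dw e] := sig_key Uw.
  by exists (x, s w) => //; split => //; split => //; exact: (sG0 HG).
have oW : open W.
  rewrite Wchar; apply: bigcup_open => x Bx; apply: openI.
    by apply: cont_open => //; case: (HU1 x).
  exact: cont_open.
have uniq w x v x' : V v -> B x -> B x' -> w = fmap (x, v) -> U x' (i w) -> x' = x.
  move=> Vv Bx Bx' -> Ux'; have [_ e] := sig_key Ux'.
  rewrite (fs x v Vv Bx) in e; apply: (finj x' x v Vv Bx' Bx); exact: e.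
pose pk w := match pselect (exists x, B x /\ U x (i w)) with
  | left H => projT1 (cid H) | right _ => u end.
have pkP w x v : V v -> B x -> w = fmap (x, v) -> pk w = x.
  move=> Vv Bx ew; rewrite /pk; case: pselect => [H|nH]; last first.
    exfalso; apply: nH; exists x; split => //; rewrite ew; apply: sig_U; exact: VD.
  case: (cid H) => x' [Bx' Ux'] /=; exact: uniq ew Ux'.
pose ginv w := (pk w, s w).
have gf p : (B `*` V) p -> ginv (fmap p) = p.
  case: p => x v [/= Bx Vv]; rewrite /ginv (pkP _ x v) // fs //.
have fg w : W w -> fmap (ginv w) = w.
  by move=> [p Bp <-]; rewrite gf.
exists V, W, fmap; split.
- split => //; split => //; split => //; by exists N.
- split; last split.
  + split.
    * split.
      -- by move=> p Bp; exists p.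
      -- by move=> p q /set_mem Bp /set_mem Bq; apply: finj2.
      -- by move=> w Ww.
    * apply/cwP => -[x v] [/= Bx Vv] Q oQ Qx.
      have [Nv [oNv Nvv NvQ]] := sig_cw (VD _ _ Vv Bx) oQ Qx.
      exists ((i @^-1` U x) `*` Nv); split.
      -- apply: open_setX' => //; apply: cont_open => //; by case: (HU1 x).
      -- by split => //=; case: (HU1 x).
      -- move=> [x' v'] [/= Ux' Nv'] [/= Bx' Vv'].
         have ex : x' = x by apply: fiber_disc; rewrite ?B_s.
         subst x'; apply: NvQ => //; exact: VD.
    * exists ginv; split.
      -- split.
         ++ by move=> w [p Bp <-]; rewrite gf.
         ++ move=> w w' /set_mem Ww /set_mem Ww' e.
            by rewrite -(fg w Ww) -(fg w' Ww') e.
         ++ by move=> p Bp; exists (fmap p); [exists p | rewrite gf].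
      -- by move=> p Bp; apply: gf.
      -- exact: fg.
      -- apply/cwP => w [[x v] [/= Bx Vv] ew] Q oQ Qw.
         have gw : ginv w = (x, v) by rewrite -ew gf.
         rewrite gw in Qw.
         have [Q1 [Q2 [hQ1 hQ2 Q1x Q2v Q12]]] := open_prod_box oQ Qw.
         exists (i @^-1` U x `&` s @^-1` Q2); split.
         ++ apply: openI; last exact: cont_open.
            by apply: cont_open => //; case: (HU1 x).
         ++ split; first by rewrite -ew; apply: sig_U; exact: VD.
            by rewrite /= -ew fs.
         ++ move=> w' [/= Uw' Qw'] [[x'' v''] [/= Bx'' Vv''] ew'].
            have ex : x = x'' by apply: (uniq w' x'' v'' x) => //; rewrite ew'.
            subst x''; rewrite /ginv (pkP w' x v'') //.
            by apply: Q12.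
  + by move=> v Vv; apply: fu.
  + by move=> x Bx; rewrite /fmap /= -(B_s Bx) sig_at.
- move=> v Vv; apply/seteqP; split.
    move=> w [[x v'] [/= Bx ->] <-].
    apply/(ball_unit HG Hl _ _ (VG _ Vv)); split; first exact: fs.
    exact: Vl.
  move=> y /(ball_unit HG Hl _ _ (VG _ Vv)) [sy ly].
  case: (pselect (G0 y)) => Gy.
    have ey : y = v by rewrite -sy (unit_s HG Gy).
    by exists (u, v); [split => //; exact: B_u | rewrite fu // ey].
  have [x [Bx Ux]] := VQ v Vv y sy ly Gy.
  have [_ e] := sig_key Ux.
  by exists (x, v) => //; rewrite /fmap /= -sy.
- move=> x y v Bx By Vv.
  rewrite rho_same; last by rewrite !B_s.
  rewrite rho_same; last by rewrite !fs.
  rewrite -EFinB abse_EFin lte_fin.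
  have := Vp v x y Vv Bx By (VD _ _ Vv Bx) (VD _ _ Vv By).
  move=> h; apply: (lt_le_trans h); case: eqP => _ //. by rewrite ge_min lexx.
Qed.

End WithS.

End Main.

Unset Implicit Arguments. Set Strict Implicit.

Theorem mainTheorem15 (R : realType) (G : topologicalType) (G0 : set G)
    (s r : G -> G) (m : G -> G -> G) (i : G -> G) (l : G -> R)
    (u : G) (Rad eps : R) :
  is_topological_groupoid G0 s r m i ->
  is_etale G0 r ->
  hausdorff_space G ->
  locally_compact [set: G] ->
  sigma_compact G ->
  is_length_function G0 s r m i l ->
  continuous l ->
  length_proper G0 l ->
  length_controlled l ->
  G0 u -> 0 < Rad -> 0 < eps ->
  exists (S : R) (V W : set G) (f : G * G -> G),
    [/\ Rad <= S < Rad + eps,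
        (V `<=` G0 /\ rel_open G0 V /\ V u) /\ open W,
        homeo_on (cball_rho s m i l u S `*` V) W f /\
        (forall v, V v -> f (u, v) = v) /\
        (forall x, cball_rho s m i l u S x -> f (x, u) = x),
        (forall v, V v ->
           f @` (cball_rho s m i l u S `*` [set v]) = cball_rho s m i l v S) &
        (forall x y v, cball_rho s m i l u S x -> cball_rho s m i l u S y -> V v ->
           (`| rho s m i l x y - rho s m i l (f (x, v)) (f (y, v)) | < eps%:E)%E)].
Proof.
move=> [HG Hm' Hi] Het Hhaus _ _ Hl Hlc Hprop _ Hu HRad Heps.
have Hm : cw [set p : G * G | s p.1 = r p.2] (fun p => m p.1 p.2) by apply/cwP.
have Hr : continuous r.
  move=> x; have [U [oU Ux _ [_ cU _]]] := Het x.
  have : {in U, continuous r} by rewrite -continuous_open_subspace.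
  by apply; apply/mem_set.
have Hs : continuous s.
  have -> : s = r \o i by apply: funext => y; rewrite /= (ri HG).
  by move=> x; apply: continuous_comp; [exact: Hi | exact: Hr].
have hU : forall x, exists U, [/\ open U, U (i x), rel_open G0 (r @` U) &
    homeo_on U (r @` U) r] by move=> x; apply: Het.
have [Uf hUf] := choice hU.
have hg : forall x, exists g, [/\ set_bij (r @` Uf x) (Uf x) g,
    (forall y, Uf x y -> g (r y) = y), (forall v, (r @` Uf x) v -> r (g v) = v)
    & {within r @` Uf x, continuous g}].
  by move=> x; have [_ _ _ [_ _ [g hg]]] := hUf x; exists g.
have [gf hgf] := choice hg.
have HU1 : forall x, open (Uf x) /\ Uf x (i x) by move=> x; case: (hUf x).
have HU2 : forall x v, (r @` Uf x) v -> Uf x (gf x v) /\ r (gf x v) = v.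
  by move=> x v Dv; case: (hgf x) => [[hf _ _] _ h3 _]; split; [apply: hf | apply: h3].
have HU3 : forall x y, Uf x y -> gf x (r y) = y by move=> x; case: (hgf x).
have HU4 : forall x, cw (r @` Uf x) (gf x).
  by move=> x; case: (hgf x) => _ _ _ /cwP.
have HU5 : forall x, exists2 Q, open Q & r @` Uf x = Q `&` G0.
  by move=> x; case: (hUf x) => _ _ [Q [oQ eQ]] _; exists Q.
have [S [HS1 HS2]] := exists_S HG Hi Hs Hhaus Hlc Hprop HU1 HU3 u Rad Heps.
have [V [W [f [A1 A2 A3 A4]]]] :=
  main_S HG Hl Hm Hi Hs Hhaus Hlc Hprop HU1 HU2 HU3 HU4 HU5 Hu HRad Heps HS1 HS2.
by exists S, V, W, f; split.
Qed.
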